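(* Let $G$ and $H$ be connected graphs of order at least two such that neither $G$ nor $H$ is a complete graph. Suppose $\textnormal{diam}(G\diamond H)=3$, neither $G$ nor $H$ has a pair of distinct adjacent twins, $G$ has neither a universal vertex nor a $\gamma_G$-pair, and $H$ has a $\gamma_H$-pair. (a) If $V(H)\setminus\mathbb{P}(H)=\{h^*\}$ for a single vertex $h^*$, then $(G\diamond H)_{\rm SR}\cong \overline{G}\cup\frac{|V(G)|(|V(H)|-1)}{2}K_2$. (b) If $V(H)=\mathbb{P}(H)$, then $(G\diamond H)_{\rm SR}\cong\frac{|V(G)||V(H)|}{2}K_2$.
   Context: All graphs are finite, simple and undirected; $d(x,y)$ is the shortest-path distance; $\overline{X}$ denotes the complement of $X$; $kK_2$ is the disjoint union of $k$ copies of $K_2$ and $\cup$ denotes disjoint union; $N_X[x]=N_X(x)\cup\{x\}$. A universal vertex of $X$ is a vertex adjacent to all other vertices. Distinct vertices $u,w$ are adjacent twins if $N[u]=N[w]$. A set $D$ is a dominating set of $X$ if $\bigcup_{x\in D}N[x]=V(X)$. A pair $\{u,w\}$ is a $\gamma_X$-pair if $\{u,w\}$ is a minimum dominating set of $X$ with $N_X[u]\cap N_X[w]=\emptyset$ and $N_X[u]\cup N_X[w]=V(X)$; $\mathbb{P}(X)$ is the set of vertices of $X$ belonging to some $\gamma_X$-pair. The modular product $G\diamond H$ has vertex set $V(G)\times V(H)$, and $(g,h)$, $(g',h')$ are adjacent iff one of the following holds: ($g=g'$ and $hh'\in E(H)$), or ($h=h'$ and $gg'\in E(G)$), or ($gg'\in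 E(G)$ and $hh'\in E(H)$), or ($gg'\in E(\overline{G})$ and $hh'\in E(\overline{H})$). A vertex $u$ is maximally distant from $v$ if $d(u,v)\ge d(w,v)$ for every neighbor $w$ of $u$; $u,v$ are mutually maximally distant (MMD) if each is maximally distant from the other. For a connected graph $X$, the strong resolving graph $X_{\rm SR}$ has vertex set $\{x\in V(X): x\text{ is MMD with some }y\}$ and edges exactly the MMD pairs of $X$. *)

(* Defs.v *)
From mathcomp Require Import all_boot.
Set Implicit Arguments. Unset Strict Implicit. Unset Printing Implicit Defensive.

Record sgraph := SGraph {
  vert : finType;
  adj : rel vert;
  adj_sym : symmetric adj;
  adj_irr : irreflexive adj }.

Section Basic.
Variable X : sgraph.
Implicit Types x y u w : vert X.

Definition connected_graph : Prop := forall x y, connect (@adj X) x y.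
Definition complete_graph : Prop := forall x y, x != y -> adj x y.
Definition gorder := #|vert X|.

Definition cnbhd x : {set vert X} := [set y | (y == x) || adj x y].

Fixpoint ball x (n : nat) : {set vert X} :=
  if n is m.+1 then ball x m :|: [set y | [exists z in ball x m, adj z y]]
  else [set x].

(* shortest-path distance: least n with y within n steps of x
   (equals #|vert X| if y is unreachable; irrelevant for connected graphs) *)
Definition dist x y : nat := find (fun n => y \in ball x n) (iota 0 #|vert X|).

Definition diam : nat := \max_(p : vert X * vert X) dist p.1 p.2.

Definition universal x : Prop := forall y, y != x -> adj x y.
Definition adj_twins u w : bool := (u != w) && (cnbhd u == cnbhd w).
Definition has_adj_twins : Prop := exists u w, adj_twins u w.

Definition dominating (D : {set vert X}) : bool :=
  \bigcup_(x in D) cnbhd x == [set: vert X].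
Definition gamma : nat := \big[minn/#|vert X|]_(D : {set vert X} | dominating D) #|D|.

Definition gamma_pair u w : bool :=
  [&& u != w, dominating [set u; w], #|[set u; w]| == gamma,
      cnbhd u :&: cnbhd w == set0 & cnbhd u :|: cnbhd w == [set: vert X]].
Definition has_gamma_pair : Prop := exists u w, gamma_pair u w.
Definition Pset : {set vert X} := [set x | [exists y, gamma_pair x y]].

Definition max_distant u v : bool := [forall w, adj u w ==> (dist w v <= dist u v)].
Definition mmd u v : bool := max_distant u v && max_distant v u.
End Basic.

Definition cadj (X : sgraph) : rel (vert X) := fun x y => (x != y) && ~~ adj x y.
Lemma cadj_sym X : symmetric (@cadj X).
Proof. by move=> x y; rewrite /cadj eq_sym adj_sym. Qed.
Lemma cadj_irr X : irreflexive (@cadj X).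
Proof. by move=> x; rewrite /cadj eqxx. Qed.
Definition compl (X : sgraph) : sgraph := SGraph (@cadj_sym X) (@cadj_irr X).

Definition madj (G H : sgraph) : rel (vert G * vert H) := fun x y =>
  [|| (x.1 == y.1) && adj x.2 y.2, (x.2 == y.2) && adj x.1 y.1,
      adj x.1 y.1 && adj x.2 y.2 | cadj x.1 y.1 && cadj x.2 y.2].
Lemma madj_sym G H : symmetric (@madj G H).
Proof.
move=> x y; rewrite /madj (eq_sym x.1) (eq_sym x.2) (adj_sym x.1) (adj_sym x.2).
by rewrite (cadj_sym x.1) (cadj_sym x.2).
Qed.
Lemma madj_irr G H : irreflexive (@madj G H).
Proof. by move=> x; rewrite /madj !adj_irr (cadj_irr x.1) !andbF. Qed.
Definition mprod (G H : sgraph) : sgraph := SGraph (@madj_sym G H) (@madj_irr G H).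

Definition sr_vert (X : sgraph) := {x : vert X | [exists y, mmd x y]}.
Definition sradj (X : sgraph) : rel (sr_vert X) := fun x y =>
  (val x != val y) && mmd (val x) (val y).
Lemma sradj_sym X : symmetric (@sradj X).
Proof. by move=> x y; rewrite /sradj eq_sym /mmd [max_distant (val y) _ && _]andbC. Qed.
Lemma sradj_irr X : irreflexive (@sradj X).
Proof. by move=> x; rewrite /sradj eqxx. Qed.
Definition SR (X : sgraph) : sgraph := SGraph (@sradj_sym X) (@sradj_irr X).

Definition uadj (X Y : sgraph) : rel (vert X + vert Y) := fun x y =>
  match x, y with
  | inl a, inl b => adj a b
  | inr a, inr b => adj a b
  | _, _ => false end.
Lemma uadj_sym X Y : symmetric (@uadj X Y).
Proof. by case=> a [] b //=; rewrite adj_sym. Qed.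
Lemma uadj_irr X Y : irreflexive (@uadj X Y).
Proof. by case=> a /=; rewrite adj_irr. Qed.
Definition dunion (X Y : sgraph) : sgraph := SGraph (@uadj_sym X Y) (@uadj_irr X Y).

Definition kadj (k : nat) : rel ('I_k * bool) := fun x y =>
  (x.1 == y.1) && (x.2 != y.2).
Lemma kadj_sym k : symmetric (@kadj k).
Proof. by move=> x y; rewrite /kadj eq_sym (eq_sym x.2). Qed.
Lemma kadj_irr k : irreflexive (@kadj k).
Proof. by move=> x; rewrite /kadj !eqxx. Qed.
Definition kK2 (k : nat) : sgraph := SGraph (@kadj_sym k) (@kadj_irr k).

Definition isomorphic (X Y : sgraph) : Prop :=
  exists f : vert X -> vert Y, bijective f /\ forall x y, adj (f x) (f y) = adj x y.

(* Main.v *)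
Require Import Defs.
From mathcomp Require Import all_boot zify.
Set Implicit Arguments. Unset Strict Implicit. Unset Printing Implicit Defensive.


Section Basics.
Variable X : sgraph.
Implicit Types x y z : vert X.

Definition nb x y := (y == x) || adj x y.

Lemma in_cnbhd x y : (y \in cnbhd x) = nb x y.
Proof. by rewrite inE. Qed.

Lemma nbC x y : nb x y = nb y x.
Proof. by rewrite /nb eq_sym adj_sym. Qed.

Lemma nbxx x : nb x x.
Proof. by rewrite /nb eqxx. Qed.

Lemma adj_neq x y : adj x y -> x != y.
Proof. by apply: contraTneq => ->; rewrite adj_irr. Qed.

Lemma ball_mono x m n : m <= n -> ball x m \subset ball x n.
Proof.
elim: n => [|n IH]; first by rewrite leqn0 => /eqP ->.
rewrite leq_eqVlt => /orP [/eqP -> //|lt]. 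
apply: subset_trans (IH lt) _; exact: subsetUl.
Qed.

Lemma in_ball1 x y : (y \in ball x 1) = nb x y.
Proof.
rewrite /= !inE /nb; congr (_ || _); apply/exists_inP/idP => [[z]|h].
  by rewrite inE => /eqP ->.
by exists x; rewrite ?inE.
Qed.

Lemma in_ball2 x y : (y \in ball x 2) = nb x y || [exists z, nb x z && adj z y].
Proof.
rewrite [ball x 2]/= inE -/(ball x 1) in_ball1 inE; congr (_ || _).
apply/exists_inP/existsP => [[z]|[z /andP[]]]; rewrite ?in_ball1.
  by move=> *; exists z; apply/andP.
by move=> *; exists z; rewrite ?in_ball1.
Qed.

Lemma dist_le x y n : n < #|vert X| -> (dist x y <= n) = (y \in ball x n).
Proof.
move=> ltn; rewrite /dist; apply/idP/idP => [le|yin].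
  have hs : has (fun n => y \in ball x n) (iota 0 #|vert X|).
    apply/negPn/negP => hn; move: le; rewrite (hasNfind hn) size_iota.
    by rewrite leqNgt ltn.
  have hlt := hs; rewrite has_find size_iota in hlt.
  have := nth_find 0 hs; rewrite nth_iota // add0n.
  by move=> hin; apply: (subsetP (ball_mono x le)).
rewrite leqNgt; apply/negP => lt.
have := before_find 0 lt; rewrite nth_iota ?add0n // => /negP; apply.
exact: yin.
Qed.

Lemma dist0 x y : 0 < #|vert X| -> (dist x y == 0) = (y == x).
Proof. by move=> h; rewrite -leqn0 dist_le //= inE. Qed.

End Basics.


Section Gam.
Variable X : sgraph.
Implicit Types x y z u w a b h : vert X.

Lemma domP (D : {set vert X}) :
  reflect (forall y, exists2 x, x \in D & nb x y) (dominating D).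
Proof.
apply: (iffP eqP) => [E y | h].
  have : y \in [set: vert X] by rewrite inE.
  by rewrite -E => /bigcupP [x xD]; rewrite in_cnbhd; exists x.
apply/setP => y; rewrite inE; case: (h y) => x xD nxy.
by apply/bigcupP; exists x; rewrite ?in_cnbhd.
Qed.

Lemma gp_sym u w : gamma_pair u w = gamma_pair w u.
Proof.
by rewrite /gamma_pair eq_sym setUC [cnbhd w :&: _]setIC [cnbhd w :|: _]setUC.
Qed.

Lemma gp_part u w : gamma_pair u w -> u != w /\ forall y, nb w y = ~~ nb u y.
Proof.
case/and5P => uw _ _ /eqP I /eqP U; split => // y.
have Iy : y \in cnbhd u :&: cnbhd w = false by rewrite I inE.
have Uy : y \in cnbhd u :|: cnbhd w by rewrite U inE.
move: Iy Uy; rewrite in_setI in_setU !in_cnbhd.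
by case: (nb u y); case: (nb w y).
Qed.

Lemma bigmin_le (I : eqType) (r : seq I) (P : pred I) (F : I -> nat) (x0 : nat) j :
  j \in r -> P j -> \big[minn/x0]_(i <- r | P i) F i <= F j.
Proof.
elim: r => [//|a r IH]; rewrite inE big_cons => /orP [/eqP <-|jr] Pj.
  by rewrite Pj geq_minl.
case: (P a); last exact: IH.
by rewrite geq_min IH ?orbT.
Qed.

Lemma gamma_le (D : {set vert X}) : dominating D -> gamma X <= #|D|.
Proof. by move=> dD; rewrite /gamma; apply: bigmin_le; rewrite ?mem_index_enum. Qed.

Lemma gamma_ge2 : 2 <= #|vert X| -> ~ (exists x, universal x) -> 2 <= gamma X.
Proof.
move=> c2 nu; rewrite /gamma; apply: (big_ind (fun m => 2 <= m)) => //.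
  by move=> a b ha hb; rewrite leq_min ha hb.
move=> D /domP dD; rewrite leqNgt; apply/negP => lt.
have : #|D| = 0 \/ #|D| = 1 by case: #|D| lt => [|[|]] //; [left|right].
case=> [/eqP|].
  rewrite cards_eq0 => /eqP D0.
  have /card_gt0P [y _] : 0 < #|vert X| by apply: ltnW.
  by case: (dD y) => x; rewrite D0 inE.
move/eqP/cards1P => [x Dx]; apply: nu; exists x => y yx.
case: (dD y) => z; rewrite Dx inE => /eqP -> /orP [/eqP e|//].
by rewrite e eqxx in yx.
Qed.

Lemma part_gp u w : u != w -> (forall y, nb w y = ~~ nb u y) -> gamma X = 2 ->
  gamma_pair u w.
Proof.
move=> uw h g2; rewrite /gamma_pair uw cards2 uw g2 eqxx /=.
apply/and3P; split.
- apply/domP => y; case e: (nb u y); first by exists u; rewrite ?inE ?eqxx.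
  by exists w; rewrite ?inE ?eqxx ?orbT // h e.
- by apply/eqP/setP => y; rewrite in_setI !in_cnbhd inE h; case: (nb u y).
- by apply/eqP/setP => y; rewrite in_setU !in_cnbhd inE h; case: (nb u y).
Qed.

Lemma gp_gamma u w : gamma_pair u w -> gamma X = 2.
Proof. by case/and5P => uw _ /eqP <- _ _; rewrite cards2 uw. Qed.

Lemma ex_nnb_of_pair a b : gamma_pair a b -> forall h, exists y, ~~ nb h y.
Proof.
move=> /gp_part [_ hab] h; apply/existsP; apply: contraT => /existsPn hn.
have := hab h; rewrite nbC (nbC a h).
by have := hn a; have := hn b; rewrite !negbK => -> ->.
Qed.

Lemma nbr_exists : connected_graph X -> 2 <= #|vert X| -> forall x, exists y, adj x y.
Proof.
move=> cX c2 x.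
have [y yx] : exists y, y != x.
  apply/existsP; apply: contraT => /existsPn hn.
  have : #|vert X| <= 1.
    apply/card_le1_eqP => a b _ _; have := hn a; have := hn b.
    by rewrite !negbK => /eqP -> /eqP ->.
  by rewrite leqNgt c2.
case/connectP: (cX x y) => [[|z p]] /=; first by move=> _ e; rewrite e eqxx in yx.
by case/andP => axz _ _; exists z.
Qed.

Lemma twins_diff : ~ has_adj_twins X -> forall a b, a != b -> exists y, nb a y != nb b y.
Proof.
move=> nt a b ab; apply/existsP; apply: contraT => /existsPn hn; exfalso.
apply: nt; exists a, b; rewrite /adj_twins ab /=.
by apply/eqP/setP => y; rewrite !in_cnbhd; have := hn y; rewrite negbK => /eqP.
Qed.

Lemma nonuniv : ~ (exists x, universal x) -> forall x, exists y, ~~ nb x y.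
Proof.
move=> nu x; apply/existsP; apply: contraT => /existsPn hn; exfalso.
apply: nu; exists x => y yx; have := hn y; by rewrite negbK /nb (negbTE yx).
Qed.

Lemma nopart : 2 <= #|vert X| -> ~ (exists x, universal x) -> ~ has_gamma_pair X ->
  forall a b, exists y, nb b y = nb a y.
Proof.
move=> c2 nu ng a b; suff: [exists y, nb b y == nb a y] by case/existsP => y /eqP; exists y.
apply: contraT => /existsPn hn; exfalso.
have h : forall y, nb b y = ~~ nb a y.
  by move=> y; have := hn y; case: (nb b y); case: (nb a y).
have ab : a != b by apply/eqP => e; have := h a; rewrite -e nbxx.
apply: ng; exists a, b; apply: part_gp => //.
apply/eqP; rewrite eqn_leq gamma_ge2 // andbT.
apply: (@leq_trans #|[set a; b]|); first apply: gamma_le; last by rewrite cards2 ab.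
apply/domP => y; case e: (nb a y); first by exists a; rewrite ?inE ?eqxx.
by exists b; rewrite ?inE ?eqxx ?orbT // h e.
Qed.

Lemma partner_uniq : ~ has_adj_twins X -> forall h a b,
  gamma_pair h a -> gamma_pair h b -> a = b.
Proof.
move=> nt h a b /gp_part [_ ha] /gp_part [_ hb]; apply/eqP/negPn/negP => ab.
case: (twins_diff nt ab) => y; by rewrite ha hb eqxx.
Qed.

End Gam.


Section MP.
Variables G H : sgraph.
Notation M := (mprod G H).
Implicit Types u v w z : vert M.

Lemma madjE u v : adj u v =
  if u.1 == v.1 then adj u.2 v.2 else if adj u.1 v.1 then nb u.2 v.2 else ~~ nb u.2 v.2.
Proof.
rewrite /= /madj /cadj /nb; case: (eqVneq u.1 v.1) => [->|ne].
  by rewrite adj_irr /= !andbF !orbF.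
rewrite /= (eq_sym v.2); case: (adj u.1 v.1) => /=; rewrite ?andbT ?andbF ?orbF //.
by rewrite negb_or.
Qed.

Lemma madjE2 (u v : vert G * vert H) : madj u v =
  if u.1 == v.1 then adj u.2 v.2 else if adj u.1 v.1 then nb u.2 v.2 else ~~ nb u.2 v.2.
Proof. exact: (madjE u v). Qed.

Lemma nbME u v : nb u v =
  if u.1 == v.1 then nb u.2 v.2 else if adj u.1 v.1 then nb u.2 v.2 else ~~ nb u.2 v.2.
Proof.
rewrite {1}/nb madjE; case: u v => [g h] [g' h'] /=; rewrite xpair_eqE /=.
have [e|ne] := eqVneq g g'; first by [].
by [].
Qed.

Lemma adj_nb (X : sgraph) (x y : vert X) : adj x y -> nb x y.
Proof. by rewrite /nb => ->; rewrite orbT. Qed.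

Definition FAR u v := (u.1 == v.1) && gamma_pair u.2 v.2.

Lemma FAR_sym u v : FAR u v = FAR v u.
Proof. by rewrite /FAR eq_sym gp_sym. Qed.

Lemma far_out u v : FAR u v -> v \notin ball u 2.
Proof.
move=> F; rewrite in_ball2 negb_or; apply/andP; split.
  move: F; case: u v => [g h] [g' h'] /andP [/eqP /= <- gp].
  have [hh' part] := gp_part gp.
  by rewrite nbME /= eqxx; move: (part h'); rewrite nbxx; case: (nb h h').
apply/existsPn => z; rewrite nbME madjE.
move: F; case: u v z => [g h] [g' h'] [x y] /andP [/eqP /= <- gp].
have [hh' part] := gp_part gp.
rewrite (eq_sym x g) (adj_sym x g) (nbC y h') part.
case: (eqVneq g x) => [_|gx].
  by apply/negP => /andP [n1 /adj_nb]; rewrite nbC part n1.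
by case: (adj g x); case: (nb h y).
Qed.

Lemma adjR (X : sgraph) (a b : vert X) : adj a b ->
  [/\ (a == b) = false, (b == a) = false, adj a b = true & adj b a = true].
Proof.
move=> ab; have ne := adj_neq ab.
by rewrite (adj_sym b) ab (negbTE ne) eq_sym (negbTE ne).
Qed.

Lemma cadjR (X : sgraph) (a b : vert X) : ~~ nb a b ->
  [/\ (a == b) = false, (b == a) = false, adj a b = false & adj b a = false].
Proof.
rewrite /nb negb_or => /andP [/negbTE ba /negbTE ab].
by rewrite (adj_sym b) ab eq_sym ba.
Qed.

Ltac rwR H := let a := fresh in let b := fresh in let c := fresh in let d := fresh in
  case: (H) => a b c d; rewrite ?a ?b ?c ?d /=; clear a b c d.

Hypotheses (cG : connected_graph G) (cH : connected_graph H)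
  (oG : 2 <= #|vert G|) (oH : 2 <= #|vert H|)
  (ntG : ~ has_adj_twins G) (ntH : ~ has_adj_twins H)
  (nuG : ~ (exists x : vert G, universal x)) (ngG : ~ has_gamma_pair G)
  (gH : has_gamma_pair H).

Lemma nbrG (g : vert G) : exists x, adj g x. Proof. exact: nbr_exists cG oG g. Qed.
Lemma nbrH (h : vert H) : exists y, adj h y. Proof. exact: nbr_exists cH oH h. Qed.
Lemma nnbG (g : vert G) : exists x, ~~ nb g x. Proof. exact: nonuniv nuG g. Qed.
Lemma nnbH (h : vert H) : exists y, ~~ nb h y.
Proof. by case: gH => a [b gp]; exact: ex_nnb_of_pair gp h. Qed.
Lemma gammaH : gamma H = 2.
Proof. by case: gH => a [b gp]; exact: gp_gamma gp. Qed.

Lemma common u v z : adj u z -> adj z v -> v \in ball u 2.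
Proof.
move=> uz zv; rewrite in_ball2; apply/orP; right; apply/existsP; exists z.
by rewrite adj_nb.
Qed.

Lemma close u v : ~~ FAR u v -> v \in ball u 2.
Proof.
move=> nF; case nuv: (nb u v); first by rewrite in_ball2 nuv.
move: nF nuv; rewrite /FAR nbME; case: u v => [g h] [g' h'] /=.
case: (eqVneq g g') => [<-|gg'] /=.
  move=> ngp nhh.
  have [y hy] : exists y, nb h' y = nb h y.
    suff: [exists y, nb h' y == nb h y] by case/existsP => y /eqP; exists y.
    apply: contraT => /existsPn hn; exfalso; move/negP: ngp; apply.
    apply: part_gp; last exact: gammaH.
      by apply/eqP => e; rewrite e nbxx in nhh.
    by move=> y; have := hn y; case: (nb h' y); case: (nb h y).
  case e: (nb h y).
    have [x gx] := nbrG g.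
    apply: (common (z := (x, y))); rewrite madjE /=; rwR (adjR gx) => //.
    by rewrite nbC hy.
  have [x gx] := nnbG g.
  apply: (common (z := (x, y))); rewrite madjE /=; rwR (cadjR gx); rewrite ?e //.
  by rewrite nbC hy e.
case agg: (adj g g') => _ nhh.
  have [x hx] := twins_diff ntG gg'.
  case e1: (nb g x); case e2: (nb g' x); rewrite ?e1 ?e2 // in hx.
    have gx : adj g x.
      move: e1; rewrite /nb; case: eqP => [ex|_ //].
      by move: e2; rewrite ex /nb (negbTE gg') adj_sym agg.
    apply: (common (z := (x, h))); rewrite madjE /=; rwR (adjR gx); rewrite ?nbxx //.
    rwR (cadjR (negbT e2)); by rewrite nhh.
  have gx : adj g' x.
    move: e2; rewrite /nb; case: eqP => [ex|_ //].
    by move: e1; rewrite ex /nb eq_sym (negbTE gg') agg.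
  apply: (common (z := (x, h'))); rewrite madjE /=; rwR (cadjR (negbT e1)).
    by rewrite nhh.
  by rwR (adjR gx); rewrite nbxx.
move/negbFE: nhh => nhh.
case: (eqVneq h h') => [<-|hh'].
  have [x hx] := nopart oG nuG ngG g g'.
  case e: (nb g x).
    have gx : adj g x.
      move: (e); rewrite /nb; case: eqP => [ex|_ //].
      by move: hx; rewrite ex nbxx /nb (negbTE gg') adj_sym agg.
    have g'x : adj g' x.
      move: (hx); rewrite e /nb; case: eqP => [ex|_ //].
      by move: (e); rewrite ex /nb eq_sym (negbTE gg') agg.
    have [y hy] := nbrH h.
    apply: (common (z := (x, y))); rewrite madjE /=; rwR (adjR gx); first by rewrite adj_nb.
    by rwR (adjR g'x); rewrite nbC adj_nb.
  have [y hy] := nnbH h.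
  apply: (common (z := (x, y))); rewrite madjE /=; rwR (cadjR (negbT e)) => //.
  by rwR (cadjR (negbT (etrans hx e))); rewrite nbC.
have ahh : adj h h' by move: nhh; rewrite /nb eq_sym (negbTE hh').
have [y hy] := twins_diff ntH hh'.
case e1: (nb h y); case e2: (nb h' y); rewrite ?e1 ?e2 // in hy.
  have hy' : adj h y.
    move: (e1); rewrite /nb; case: eqP => [ex|_ //].
    by move: e2; rewrite ex /nb adj_sym ahh orbT.
  apply: (common (z := (g, y))); rewrite madjE /= ?eqxx //.
  rewrite (negbTE gg') agg nbC; exact: negbT.
have hy' : adj h' y.
  move: (e2); rewrite /nb; case: eqP => [ex|_ //].
  by move: e1; rewrite ex nhh.
apply: (common (z := (g', y))); rewrite madjE /= ?eqxx ?(negbTE gg') ?agg ?e1 //.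
by rewrite adj_sym.
Qed.

Lemma nb_adj (X : sgraph) (a x : vert X) : nb a x -> x != a -> adj a x.
Proof. by rewrite /nb => /orP [/eqP ->|//]; rewrite eqxx. Qed.

Lemma cardM : 3 < #|vert M|.
Proof.
rewrite [#|vert M|]card_prod; exact: (leq_mul oG oH).
Qed.

Lemma dist_le1 u v : (dist u v <= 1) = nb u v.
Proof. by rewrite dist_le ?in_ball1 //; apply: leq_trans cardM. Qed.

Lemma dist_le2 u v : (dist u v <= 2) = (v \in ball u 2).
Proof. by rewrite dist_le //; apply: leq_trans cardM. Qed.

Hypothesis dM : diam M = 3.

Lemma dist_le3 u v : dist u v <= 3.
Proof. by rewrite -dM /diam; exact: (@leq_bigmax _ (fun p : vert M * vert M => dist p.1 p.2) (u, v)). Qed.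

Lemma wit1 u v w : nb u v -> adj u w -> ~~ nb w v -> ~~ max_distant u v.
Proof.
move=> nuv uw nwv; apply/forallPn; exists w; rewrite negb_imply uw /= -ltnNge.
by apply: (@leq_trans 2); [rewrite ltnS dist_le1 | rewrite ltnNge dist_le1].
Qed.

Lemma wit2 u v w : v \in ball u 2 -> adj u w -> FAR w v -> ~~ max_distant u v.
Proof.
move=> nuv uw nwv; apply/forallPn; exists w; rewrite negb_imply uw /= -ltnNge.
by apply: (@leq_trans 3); [rewrite ltnS dist_le2 | rewrite ltnNge dist_le2 far_out].
Qed.

Lemma adj_notmmd u v : adj u v -> ~~ mmd u v.
Proof.
move=> auv; have nuv : nb u v by rewrite adj_nb.
have nvu : nb v u by rewrite nbC.
rewrite /mmd negb_and.
suff : (exists w, adj u w && ~~ nb w v) \/ (exists w, adj v w && ~~ nb w u).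
  case=> [[w /andP [uw nw]]|[w /andP [vw nw]]]; apply/orP; [left|right].
    exact: wit1 nuv uw nw.
  exact: wit1 nvu vw nw.
move: auv; rewrite madjE; case: u v {nuv nvu} => [g h] [g' h'] /=.
case: (eqVneq g g') => [<-|gg'] /=.
  move=> ahh; have [y hy] := twins_diff ntH (adj_neq ahh).
  case e1: (nb h y); case e2: (nb h' y); rewrite ?e1 ?e2 // in hy.
    left; exists (g, y); rewrite /= madjE2 nbME /= eqxx nbC e2 andbT.
    apply: nb_adj e1 _; apply/eqP => ey; by move: e2; rewrite ey nbC adj_nb.
  right; exists (g, y); rewrite /= madjE2 nbME /= eqxx nbC e1 andbT.
  apply: nb_adj e2 _; apply/eqP => ey; by move: e1; rewrite ey adj_nb.
case agg: (adj g g') => nhh.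
  have [x hx] := twins_diff ntG gg'.
  case e1: (nb g x); case e2: (nb g' x); rewrite ?e1 ?e2 // in hx.
    have gx : adj g x.
      apply: nb_adj e1 _; apply/eqP => ex; by move: e2; rewrite ex nbC adj_nb.
    left; exists (x, h); rewrite /= madjE2 nbME /=; rwR (adjR gx); rewrite nbxx /=.
    by rwR (cadjR (negbT e2)); rewrite nhh.
  have gx : adj g' x.
    apply: nb_adj e2 _; apply/eqP => ex; by move: e1; rewrite ex adj_nb.
  right; exists (x, h'); rewrite /= madjE2 nbME /=; rwR (adjR gx); rewrite nbxx /=.
  by rwR (cadjR (negbT e1)); rewrite nbC nhh.
have [x hx] := nopart oG nuG ngG g g'.
case e: (nb g x).
  have gx : adj g x.
    apply: nb_adj e _; apply/eqP => ex; move: hx; rewrite ex nbxx /nb (negbTE gg').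
    by rewrite adj_sym agg.
  have g'x : adj g' x.
    apply: nb_adj (etrans hx e) _; apply/eqP => ex; move: e.
    by rewrite ex /nb eq_sym (negbTE gg') agg.
  left; exists (x, h); rewrite /= madjE2 nbME /=; rwR (adjR gx); rewrite nbxx /=.
  by rwR (adjR g'x).
left; exists (x, h'); rewrite /= madjE2 nbME /=; rwR (cadjR (negbT e)); rewrite nhh /=.
by rwR (cadjR (negbT (etrans hx e))); rewrite nbxx.
Qed.

Definition partner (h : vert H) : vert H := odflt h [pick w | gamma_pair h w].

Lemma partnerP h : h \in Pset H -> gamma_pair h (partner h).
Proof.
rewrite inE => /existsP [w gw]; rewrite /partner; case: pickP => [w' -> //|/(_ w)].
by rewrite gw.
Qed.

Lemma mmdC u v : mmd u v = mmd v u.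
Proof. by rewrite /mmd andbC. Qed.

Lemma far_md u v : FAR u v -> max_distant u v.
Proof.
move=> F; apply/forallP => w; apply/implyP => _; apply: leq_trans (dist_le3 w v) _.
by rewrite leqNgt ltnS dist_le2 (negbTE (far_out F)).
Qed.

Lemma far_mmd u v : FAR u v -> mmd u v.
Proof. by move=> F; rewrite /mmd !far_md // FAR_sym. Qed.

Lemma L4 u v : u != v -> ~~ adj u v -> ~~ FAR u v -> u.2 \in Pset H -> ~~ mmd u v.
Proof.
move=> uv nadj nF hP; have gp := partnerP hP; have [hk part] := gp_part gp.
rewrite /mmd negb_and; apply/orP; right; apply: (wit2 (w := (u.1, partner u.2))).
- by apply: close; rewrite FAR_sym.
- move: uv nadj nF hk part gp; rewrite madjE /FAR.
  case: u v {hP} => [g h] [g' h'] /=; rewrite madjE2 /=.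
  case: (eqVneq g g') => [<-|gg'] /= uv nadj nF hk part gp.
    have hh' : h' != h by apply: contraNneq uv => ->.
    apply: nb_adj.
      by rewrite nbC part /nb negb_or hh'.
    by apply/eqP => e; move: nF; rewrite -e gp.
  rewrite adj_sym; case agg: (adj g g') in nadj *.
    by rewrite nbC part.
  by rewrite nbC part.
- by rewrite /FAR /= eqxx gp_sym gp.
Qed.

Lemma L5md u v : v.2 \notin Pset H -> u != v -> ~~ adj u v -> max_distant u v.
Proof.
move=> vP uv nadj; apply/forallP => w; apply/implyP => _.
apply: (@leq_trans 2).
  rewrite dist_le2 close //; apply/negP => /andP [_ gp].
  by move/negP: vP; apply; rewrite inE; apply/existsP; exists w.2; rewrite gp_sym.
by rewrite ltnNge dist_le1 /nb negb_or eq_sym uv nadj.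
Qed.

Lemma Echar u v : (u != v) && mmd u v =
  FAR u v || [&& u != v, ~~ adj u v, u.2 \notin Pset H & v.2 \notin Pset H].
Proof.
case F: (FAR u v).
  rewrite far_mmd // andbT; move: F; rewrite /FAR => /andP [_ /gp_part [ne _]].
  by apply: contraNneq ne => ->.
case: (eqVneq u v) => [->|uv] //; rewrite !andTb orFb.
case a: (adj u v) => /=; first by rewrite (negbTE (adj_notmmd a)).
case hP: (u.2 \in Pset H) => /=.
  by apply: negbTE; apply: L4 uv (negbT a) (negbT F) _; rewrite hP.
case hP': (v.2 \in Pset H) => /=.
  have a' : adj v u = false by rewrite adj_sym.
  rewrite mmdC; apply: negbTE; apply: L4 _ (negbT a') _ _; rewrite ?hP' //.
  - by rewrite eq_sym.
  - by rewrite FAR_sym F.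
have a' : adj v u = false by rewrite adj_sym.
have vu : v != u by rewrite eq_sym.
apply/andP; split.
  by apply: (L5md _ uv (negbT a)); rewrite hP'.
by apply: (L5md _ vu (negbT a')); rewrite hP.
Qed.
End MP.


Lemma iso_of_inj (X Y : sgraph) (f : vert X -> vert Y) : injective f ->
  #|vert Y| <= #|vert X| -> (forall x y, adj (f x) (f y) = adj x y) -> isomorphic X Y.
Proof. by move=> fi c h; exists f; split => //; exact: inj_card_bij. Qed.

Lemma match_code (T : finType) (B : pred T) (s : T -> T) (x0 : T) : B x0 ->
  (forall x, B x -> [/\ B (s x), s (s x) = x & s x != x]) ->
  exists k (c : T -> 'I_k * bool), [/\ #|B| = k * 2, {in B &, injective c} &
    forall x y, B x -> B y -> kadj (c x) (c y) = (y == s x)].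
Proof.
move=> Bx0 hs.
pose r := fun x : T => nat_of_ord (enum_rank x).
have [R HR] : {R : {set T} | forall x, (x \in R) = B x && (r x < r (s x))}.
  by exists [set x | B x && (r x < r (s x))] => x; rewrite inE.
have sR x : B x -> (s x \in R) = ~~ (x \in R).
  move=> Bx; have [Bs ss sx] := hs x Bx; rewrite !HR Bs Bx ss /=.
  have ne : r (s x) != r x.
    by rewrite /r val_eqE (inj_eq (@enum_rank_inj T)).
  by move: ne; case: (ltngtP (r x) (r (s x))) => // ->; rewrite eqxx.
pose rep x := if x \in R then x else s x.
have repR x : B x -> rep x \in R.
  move=> Bx; rewrite /rep; case: ifP => // /negbT; by rewrite -sR.
have RB x : x \in R -> B x by rewrite HR => /andP [].
have zR := repR x0 Bx0.
exists #|R|, (fun x => (enum_rank_in zR (rep x), x \in R)); split.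
- have e1 : #|[predI B & mem R]| = #|R|.
    apply: eq_card => x; case: (boolP (x \in R)) => [xR|xR]; rewrite inE /= ?(negbTE xR) ?xR ?andbF ?andbT //; exact: RB.
  have si : {in R &, injective s}.
    move=> x y /RB Bx /RB By e; have [_ sx _] := hs x Bx; have [_ sy _] := hs y By.
    by rewrite -sx e sy.
  have e2 : #|[predD B & mem R]| = #|[set s x | x in R]|.
    apply: eq_card => x; rewrite inE /=; apply/andP/imsetP.
      move=> [nR Bx]; exists (s x); first by rewrite sR // nR.
      by have [_ -> _] := hs x Bx.
    move=> [y yR ->]; have By := RB y yR; have [Bs _ _] := hs y By.
    by rewrite sR // yR.
  have := cardID (mem R) B; rewrite e1 e2 card_in_imset //; lia.
- move=> x y Bx By [e1 e2].
  have := enum_rank_in_inj (repR x Bx) (repR y By) e1; rewrite /rep e2.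
  case: ifP => // _ e; have [_ sx _] := hs x Bx; have [_ sy _] := hs y By.
  by rewrite -sx e sy.
move=> x y Bx By; rewrite /kadj /=.
have [Bs ss sx] := hs x Bx.
apply/andP/eqP => [[/eqP e1 e2]|->].
  have := enum_rank_in_inj (repR x Bx) (repR y By) e1; rewrite /rep.
  case: (boolP (x \in R)) e2 => xR; case: (boolP (y \in R)) => yR //= _.
    move=> e; have [_ sy _] := hs y By; by rewrite e sy.
split; last by rewrite sR // ; case: (x \in R).
apply/eqP; congr (enum_rank_in _ _); rewrite /rep sR //.
by case: (boolP (x \in R)) => xR /=; rewrite ?ss.
Qed.


Theorem mainTheorem19 (G H : sgraph) :
  connected_graph G -> connected_graph H ->
  2 <= gorder G -> 2 <= gorder H ->
  ~ complete_graph G -> ~ complete_graph H ->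
  diam (mprod G H) = 3 ->
  ~ has_adj_twins G -> ~ has_adj_twins H ->
  ~ (exists x : vert G, universal x) ->
  ~ has_gamma_pair G -> has_gamma_pair H ->
  (forall hstar : vert H, ~: Pset H = [set hstar] ->
     isomorphic (SR (mprod G H))
       (dunion (compl G) (kK2 ((gorder G * (gorder H - 1)) %/ 2)))) /\
  (Pset H = [set: vert H] ->
     isomorphic (SR (mprod G H)) (kK2 ((gorder G * gorder H) %/ 2))).
Proof.
move=> cG cH oG oH _ _ dM ntG ntH nuG ngG gH.
have E := Echar cG cH oG oH ntG ntH nuG ngG gH dM.
pose s (u : vert (mprod G H)) : vert (mprod G H) := (u.1, partner u.2).
have Fs (u v : vert (mprod G H)) : u.2 \in Pset H -> FAR u v = (v == s u).
  move=> uP; have gp := partnerP uP; rewrite /FAR /s.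
  case: v => g' h' /=; apply/andP/eqP => [[/eqP <- gp2]|[-> ->]].
    by rewrite (partner_uniq ntH gp2 gp).
  by rewrite eqxx gp.
have sprop (u : vert (mprod G H)) : u.2 \in Pset H ->
    [/\ (s u).2 \in Pset H, s (s u) = u & s u != u].
  move=> uP; have gp := partnerP uP.
  have pP : partner u.2 \in Pset H by rewrite inE; apply/existsP; exists u.2; rewrite gp_sym.
  split => //.
    rewrite /s /=; have := partner_uniq ntH (partnerP pP) (etrans (gp_sym _ _) gp).
    by case: u {uP gp pP} => g h /= ->.
  have [ne _] := gp_part gp; rewrite /s; case: u {uP gp pP} ne => g h /= ne.
  by apply: contraNneq ne => [[]] ->.
have allSR (u : vert (mprod G H)) : u.2 \notin Pset H -> [exists y, mmd u y].
  move=> uP; have [x gx] := nnbG nuG u.1.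
  apply/existsP; exists (x, u.2).
  have := E u (x, u.2); rewrite uP /= andbT.
  have -> : u != (x, u.2).
    by case: u {uP} gx => g h /= gx; apply: contraNneq gx => [[->]]; rewrite nbxx.
  rewrite /FAR madjE2 /=; have [e1 _ e3 _] := cadjR gx; rewrite e1 e3 nbxx /=.
  by move=> ->.
have allSR2 (u : vert (mprod G H)) : u.2 \in Pset H -> [exists y, mmd u y].
  move=> uP; apply/existsP; exists (s u); apply: (far_mmd oG oH dM).
  by rewrite Fs.
have cardSR : #|vert (SR (mprod G H))| = #|vert G| * #|vert H|.
  rewrite /= card_sig -[#|vert G| * _]card_prod; apply: eq_card => u.
  rewrite !inE; case: (boolP (u.2 \in Pset H)) => uP; [exact: allSR2 | exact: allSR].
have [g0 _] : exists g0 : vert G, true by move: oG; rewrite /gorder => /ltnW/card_gt0P [g0 _]; exists g0.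
have [a [b gab]] := gH.
have aP : a \in Pset H by rewrite inE; apply/existsP; exists b.
split.
  move=> hs hC.
  have inP h : (h \in Pset H) = (h != hs).
    by move/setP: hC => /(_ h); rewrite !inE => <-; rewrite negbK.
  have Bx0 : (fun u : vert (mprod G H) => u.2 != hs) (g0, a) by rewrite /= -inP.
  have hsp : forall x : vert (mprod G H), x.2 != hs ->
      [/\ (s x).2 != hs, s (s x) = x & s x != x].
    move=> x Bx; have [p1 p2 p3] := sprop x (etrans (inP _) Bx); by rewrite -inP.
  have [k [c [cB ci ca]]] :=
    match_code (B := fun u : vert (mprod G H) => u.2 != hs) (s := s) Bx0 hsp.
  have cBX : k * 2 = #|vert G| * (#|vert H| - 1).
    rewrite -cB subn1 -(cardsC1 hs) -cardsT -cardsX; apply: eq_card => -[g h].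
    by rewrite in_setX !inE.
  have kE : (gorder G * (gorder H - 1)) %/ 2 = k.
    by move: cBX; rewrite /gorder; lia.
  rewrite kE.
  pose Fa (u : vert (mprod G H)) : vert (dunion (compl G) (kK2 k)) :=
    if u.2 == hs then inl u.1 else inr (c u).
  apply: (@iso_of_inj (SR (mprod G H)) (dunion (compl G) (kK2 k)) (fun u => Fa (val u))).
  - move=> [u pu] [v pv] /=; rewrite /Fa => e; apply: val_inj => /=.
    move: e; case: (eqVneq u.2 hs) => uh; case: (eqVneq v.2 hs) => vh // e.
      case: e => e1; case: u v {pu pv} uh vh e1 => g h [g' h'] /= -> -> ->; done.
    by case: e => /ci; apply.
  - rewrite cardSR /= card_sum card_prod card_ord card_bool.
    rewrite cBX mulnBr muln1 subnKC //; apply: leq_pmulr; exact: ltnW.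
  have gpP h h' : gamma_pair h h' -> (h \in Pset H) && (h' \in Pset H).
    move=> gp; rewrite !inE; apply/andP; split; apply/existsP; first by exists h'.
    by exists h; rewrite gp_sym.
  move=> [u pu] [v pv]; rewrite [RHS]/= /sradj /= E /Fa.
  case: (eqVneq u.2 hs) => uh; case: (eqVneq v.2 hs) => vh /=.
  + have gf : gamma_pair u.2 v.2 = false by rewrite uh vh /gamma_pair eqxx.
    rewrite /FAR gf andbF /= !inP uh vh eqxx /= andbT.
    have [e | ne] := eqVneq u.1 v.1.
      have -> : u = v by case: u v {pu pv gf} uh vh e => g h [g' h'] /= -> -> ->.
      by rewrite eqxx /cadj eqxx.
    rewrite madjE2 (negbTE ne) /= uh vh nbxx /=.
    have -> : u != v by apply: contraNneq ne => ->.
    by rewrite /cadj ne; case: (adj u.1 v.1).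
  + have gf : gamma_pair u.2 v.2 = false.
      by apply/negP => /gpP /andP [h1 _]; move: h1; rewrite uh inP eqxx.
    have vP : v.2 \in Pset H by rewrite inP.
    by rewrite /FAR gf andbF /= vP /= !andbF.
  + have gf : gamma_pair u.2 v.2 = false.
      by apply/negP => /gpP /andP [_ h1]; move: h1; rewrite vh inP eqxx.
    have uP : u.2 \in Pset H by rewrite inP.
    by rewrite /FAR gf andbF /= uP /= !andbF.
  + have uP : u.2 \in Pset H by rewrite inP.
    rewrite ca // (Fs _ _ uP) uP /= !andbF orbF.
    by rewrite eq_sym.
move=> hP.
have inP h : h \in Pset H by rewrite hP inE.
have Bx0 : (fun u : vert (mprod G H) => true) (g0, a) by [].
have hsp : forall x : vert (mprod G H), true ->
    [/\ true, s (s x) = x & s x != x].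
  by move=> x _; have [_ p2 p3] := sprop x (inP _).
have := match_code (B := fun u : vert (mprod G H) => true) (s := s) (x0 := (g0, a)) Bx0 hsp.
move=> [k [c [cB ci ca]]].
have cBX : k * 2 = #|vert G| * #|vert H|.
  by rewrite -cB -card_prod; apply: eq_card.
have kE : (gorder G * gorder H) %/ 2 = k.
  by move: cBX; rewrite /gorder; lia.
rewrite kE.
apply: (@iso_of_inj (SR (mprod G H)) (kK2 k) (fun u => c (val u))).
- by move=> [u pu] [v pv] /= /ci e; apply: val_inj; apply: e.
- by rewrite cardSR /= card_prod card_ord card_bool cBX.
move=> [u pu] [v pv]; rewrite [RHS]/= /sradj /= E.
rewrite ca // (Fs _ _ (inP _)) !inP /= !andbF orbF.
by rewrite eq_sym.
Qed.
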